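(* Let $V$ be a finite set, let $d\ge 1$, let $R=(\le_1,\ldots,\le_d)$ be a $d$-representation on $V$, let $R'=(\le_1,\ldots,\le_{d-1})$, and let $\psi:\Sigma(R)\setminus\Sigma(R')\to V$ be defined by $\psi(F)=\min_{\le_d}\{x\in V : x<_i\max_{\le_i}F \ \forall i\in\{1,\ldots,d-1\}\}$. Let $A=\{F\in\Sigma(R)\setminus\Sigma(R') : \psi(F)\notin F\}$ and $B=\{F\in\Sigma(R)\setminus\Sigma(R') : \psi(F)\in F\}$. Then: (1) for every $F\in A$: $F\cup\{\psi(F)\}\in B$, $\psi(F\cup\{\psi(F)\})=\psi(F)$, and $f<_d\psi(F)$ for every $f\in F$ (i.e. $\max_{\le_d}F<_d\psi(F)$ when $F\neq\emptyset$); (2) for every $F\in B$: $F\setminus\{\psi(F)\}\in A$ and $\psi(F\setminus\{\psi(F)\})=\psi(F)$.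
   Context: A $k$-representation on $V$ is a family of $k$ linear orders on $V$. For a linear order $\le$ on $V$, $x\in V$ and $F\subseteq V$, $x$ dominates $F$ in $\le$ if $f\le x$ for all $f\in F$; $x$ dominates $F$ in a representation if it dominates $F$ in at least one of its orders. For a representation $S$ on $V$, the supremum section $\Sigma(S)$ is the set of subsets $F\subseteq V$ such that every $v\in V$ dominates $F$ in $S$. When $d=1$, $R'$ has no orders and the same definition applies. The set over which the minimum defining $\psi$ is taken is nonempty for every $F\in\Sigma(R)\setminus\Sigma(R')$. $<_i$ denotes the strict order associated with $\le_i$. *)

(* Defs.v *)
From mathcomp Require Import all_boot all_order.
Set Implicit Arguments. Unset Strict Implicit. Unset Printing Implicit Defensive.

Section Defs.
Variable T : finType.

(* A linear order on T given as a boolean relation r (r x y means x <= y). *)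
Definition linear_order (r : rel T) : Prop :=
  [/\ reflexive r, antisymmetric r, transitive r & total r].

Definition strict (r : rel T) : rel T := fun x y => r x y && (x != y).

Definition dominates_in (r : rel T) (x : T) (F : {set T}) : bool :=
  [forall f in F, r f x].

(* A k-representation is a family R : 'I_k -> rel T of linear orders;
   x dominates F in R if it dominates F in at least one order. *)
Definition dominates {k : nat} (R : 'I_k -> rel T) (x : T) (F : {set T}) : bool :=
  [exists i : 'I_k, dominates_in (R i) x F].

Definition Sigma {k : nat} (R : 'I_k -> rel T) : {set {set T}} :=
  [set F : {set T} | [forall v : T, dominates R v F]].

(* The maximum of F in r (None if F has no maximum, e.g. F empty). *)
Definition maxo (r : rel T) (F : {set T}) : option T :=
  [pick m in F | dominates_in r m F].

Definition mino (r : rel T) (S : {set T}) : option T :=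
  [pick m in S | [forall s in S, r m s]].

Definition lt_max (r : rel T) (x : T) (F : {set T}) : bool :=
  if maxo r F is Some m then strict r x m else false.

(* R' = (<=_1, ..., <=_{d-1}) for R = (<=_1, ..., <=_d), d = k.+1. *)
Definition Rprime {k : nat} (R : 'I_k.+1 -> rel T) : 'I_k -> rel T :=
  fun i => R (widen_ord (leqnSn k) i).

Definition psi {k : nat} (R : 'I_k.+1 -> rel T) (F : {set T}) : option T :=
  mino (R ord_max) [set x | [forall i : 'I_k, lt_max (Rprime R i) x F]].

Definition setA {k : nat} (R : 'I_k.+1 -> rel T) : {set {set T}} :=
  [set F | [&& F \in Sigma R, F \notin Sigma (Rprime R) &
             (if psi R F is Some p then p \notin F else false)]].

Definition setB {k : nat} (R : 'I_k.+1 -> rel T) : {set {set T}} :=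
  [set F | [&& F \in Sigma R, F \notin Sigma (Rprime R) &
             (if psi R F is Some p then p \in F else false)]].
End Defs.

(* Main.v *)
Require Import Defs.
From mathcomp Require Import all_boot all_order.
Set Implicit Arguments. Unset Strict Implicit. Unset Printing Implicit Defensive.

Section Aux.
Variable T : finType.

Lemma strict_trans (r : rel T) : linear_order r -> transitive (strict r).
Proof.
case=> refl anti tr tot y x z /andP[rxy nxy] /andP[ryz nyz].
rewrite /strict (tr _ _ _ rxy ryz) /=; apply/eqP => exz; subst z.
by move/eqP: nxy; apply; apply: anti; rewrite rxy ryz.
Qed.

Lemma exists_max (r : rel T) : linear_order r -> forall n (F : {set T}),
  #|F| <= n -> forall a, a \in F -> exists2 m, m \in F & forall f, f \in F -> r f m.
Proof.
case=> refl anti tr tot; elim=> [|n IH] F hF a aF.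
  by move: hF; rewrite leqn0 => /eqP/cards0_eq Fe; rewrite Fe inE in aF.
case: (set_0Vmem (F :\ a)) => [Ge|[b bG]].
  exists a => // f fF; case: (eqVneq f a) => [->|fa]; first exact: refl.
  have : f \in F :\ a by rewrite in_setD1 fa fF.
  by rewrite Ge inE.
have hG : #|F :\ a| <= n.
  by move: hF; rewrite (cardsD1 a F) aF add1n ltnS.
have [m mG mmax] := IH _ hG b bG.
move: mG; rewrite in_setD1 => /andP[_ mF].
case/orP: (tot a m) => ram.
  exists m => // f fF; case: (eqVneq f a) => [->//|fa]; apply: mmax; by rewrite in_setD1 fa.
exists a => // f fF; case: (eqVneq f a) => [->|fa]; first exact: refl.
apply: tr ram; apply: mmax; by rewrite in_setD1 fa.
Qed.

Lemma lt_maxE (r : rel T) (lo : linear_order r) x F :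
  lt_max r x F = [exists f in F, strict r x f].
Proof.
have lo' := lo; case: lo' => refl anti tr tot.
rewrite /lt_max /maxo; case: pickP => [m /andP[mF /forall_inP dom] | H].
  apply/idP/exists_inP; first by move=> h; exists m.
  case=> f fF /andP[rxf nxf]; have rfm := dom f fF.
  rewrite /strict (tr _ _ _ rxf rfm) /=; apply/eqP => exm; subst m.
  by move/eqP: nxf; apply; apply: anti; rewrite rxf rfm.
apply/esym/negbTE/exists_inP => [[f fF _]].
have [m mF mmax] := exists_max lo (leqnn #|F|) fF.
by move: (H m); rewrite mF /=; move/negP; apply; apply/forall_inP.
Qed.

Lemma mino_spec (r : rel T) S p : mino r S = Some p ->
  p \in S /\ forall s, s \in S -> r p s.
Proof.
rewrite /mino; case: pickP => // m /andP[mS /forall_inP H] [<-]; by split.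
Qed.

Variable k : nat.
Variable R : 'I_k.+1 -> rel T.
Hypothesis HR : forall i, linear_order (R i).

Definition wd (j : 'I_k) : 'I_k.+1 := widen_ord (leqnSn k) j.

Definition S (F : {set T}) : {set T} :=
  [set x | [forall i : 'I_k, lt_max (Rprime R i) x F]].

Lemma SE F x : (x \in S F) = [forall i : 'I_k, [exists f in F, strict (R (wd i)) x f]].
Proof. rewrite inE. apply: eq_forallb => i. by rewrite (lt_maxE (HR _)). Qed.

Lemma psi_spec F p : psi R F = Some p -> p \in S F /\ forall s, s \in S F -> R ord_max p s.
Proof. exact: mino_spec. Qed.

Lemma psiS F G : S F = S G -> psi R F = psi R G.
Proof. move=> h; exact: (congr1 (mino (R ord_max)) h). Qed.

Lemma S_U F p : p \in S F -> S (p |: F) = S F.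
Proof.
move=> pS; apply/setP => x; rewrite !SE; apply/forallP/forallP => H i.
  move: (H i) => /exists_inP [f]; rewrite in_setU1 => /orP[/eqP-> sxp | fF sxf].
    move: pS; rewrite SE => /forallP/(_ i)/exists_inP[g gF spg].
    by apply/exists_inP; exists g => //; apply: (strict_trans (HR _)) sxp spg.
  by apply/exists_inP; exists f.
move: (H i) => /exists_inP [f fF sxf]; apply/exists_inP; exists f => //.
by rewrite in_setU1 fF orbT.
Qed.

Lemma S_D F p : p \in S F -> S (F :\ p) = S F.
Proof.
move=> pS; apply/setP => x; rewrite !SE; apply/forallP/forallP => H i.
  move: (H i) => /exists_inP [f]; rewrite in_setD1 => /andP[_ fF] sxf.
  by apply/exists_inP; exists f.
move: (H i) => /exists_inP [f fF sxf]; case: (eqVneq f p) => [fp|fp].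
  subst f; move: pS; rewrite SE => /forallP/(_ i)/exists_inP[g gF spg].
  apply/exists_inP; exists g; last by apply: (strict_trans (HR _)) sxf spg.
  by move: spg => /andP[_ pg]; rewrite in_setD1 eq_sym pg gF.
by apply/exists_inP; exists f => //; rewrite in_setD1 fp fF.
Qed.

Lemma S_notdom G x j : x \in S G -> ~~ dominates_in (R (wd j)) x G.
Proof.
rewrite SE => /forallP/(_ j)/exists_inP[f fG /andP[rxf nxf]].
apply/forall_inP => /(_ f fG) rfx.
case: (HR (wd j)) => _ anti _ _.
by move/eqP: nxf; apply; apply: anti; rewrite rxf rfx.
Qed.

Lemma notSigma' G x : x \in S G -> G \notin Sigma (Rprime R).
Proof.
move=> xS; rewrite inE; apply/forallP => /(_ x) /existsP [j]; apply/negP.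
exact: (S_notdom j xS).
Qed.

Lemma ordS_case (i : 'I_k.+1) : i = ord_max \/ exists j : 'I_k, i = wd j.
Proof.
case: (ltnP i k) => h; first by right; exists (Ordinal h); apply: val_inj.
left; apply: val_inj => /=; apply/eqP; by rewrite eqn_leq h -ltnS ltn_ord andbT.
Qed.

End Aux.

Theorem lemma3 (T : finType) (k : nat) (R : 'I_k.+1 -> rel T)
  (HR : forall i, linear_order (R i)) :
  (forall F : {set T}, F \in setA R ->
     exists p, [/\ psi R F = Some p, (p |: F) \in setB R,
                   psi R (p |: F) = Some p &
                   forall f, f \in F -> strict (R ord_max) f p])
  /\
  (forall F : {set T}, F \in setB R ->
     exists p, [/\ psi R F = Some p, (F :\ p) \in setA R &
                   psi R (F :\ p) = Some p]).
Proof.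
split.
  move=> F; rewrite inE => /and3P[FS FnS']; case Hp: (psi R F) => [p|] // pnF.
  have [pS pmin] := psi_spec Hp.
  have SU := S_U HR pS.
  have psiU : psi R (p |: F) = Some p by rewrite (psiS SU).
  have dom : forall f, f \in F -> R ord_max f p.
    move: FS; rewrite inE => /forallP/(_ p)/existsP[i Hi].
    case: (ordS_case i) => [Ei|[j Ej]]; subst i; first by apply/forall_inP.
    by move: (S_notdom HR j pS); rewrite Hi.
  have help : forall j v, dominates_in (R (wd j)) v F ->
      dominates_in (R (wd j)) v (p |: F).
    move=> j v /forall_inP Hi; apply/forall_inP => f; rewrite in_setU1.
    case/orP=> [/eqP->|fF]; last exact: Hi.
    move: pS; rewrite (SE HR) => /forallP/(_ j)/exists_inP[g gF /andP[rpg _]].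
    by case: (HR (wd j)) => _ _ tr _; apply: tr rpg (Hi g gF).
  exists p; split => //; last first.
    move=> f fF; rewrite /strict dom //=; apply/eqP => efp; subst f.
    by rewrite fF in pnF.
  rewrite inE; apply/and3P; split; last by rewrite psiU setU11.
    rewrite inE; apply/forallP => v.
    move: FS; rewrite inE => /forallP/(_ v)/existsP[i Hi].
    case: (ordS_case i) => [Ei|[j Ej]]; subst i; last first.
      by apply/existsP; exists (wd j); apply: help.
    case: (boolP (v \in S R F)) => vS.
      apply/existsP; exists ord_max; apply/forall_inP => f; rewrite in_setU1.
      case/orP=> [/eqP->|fF]; first exact: pmin.
      by move/forall_inP: Hi; apply.
    move: vS; rewrite (SE HR) negb_forall => /existsP[j]; rewrite negb_exists_in.
    move=> /forall_inP Hj; apply/existsP; exists (wd j); apply: help.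
    apply/forall_inP => f fF; move: (Hj f fF); rewrite /strict negb_and negbK.
    case: (HR (wd j)) => refl _ _ tot.
    case/orP: (tot f v) => // rvf; rewrite rvf /= => /eqP->; exact: refl.
  by apply: (notSigma' HR (x:=p)); rewrite SU.
move=> F; rewrite inE => /and3P[FS FnS']; case Hp: (psi R F) => [p|] // pF.
have [pS pmin] := psi_spec Hp.
have SD := S_D HR pS.
have psiD : psi R (F :\ p) = Some p by rewrite (psiS SD).
exists p; split => //.
rewrite inE; apply/and3P; split; last by rewrite psiD setD11.
  rewrite inE; apply/forallP => v.
  move: FS; rewrite inE => /forallP/(_ v)/existsP[i /forall_inP Hi].
  apply/existsP; exists i; apply/forall_inP => f; rewrite in_setD1 => /andP[_ fF].
  exact: Hi.
by apply: (notSigma' HR (x:=p)); rewrite SD.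
Qed.
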